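(* A cubical iterated graph system is of bounded geometry.
   Context: Graphs: $(V,E)$, $V$ finite non-empty, $E\subseteq V\times V$, $(x,y)\in E\Rightarrow(y,x)\notin E$; $\{x,y\}\in E$ means either orientation; a path is a sequence $[x_1,\dots,x_k]$ ($k\ge1$) with $\{x_i,x_{i+1}\}\in E$, of length $k-1$; $d_G$ is the path metric. An iterated graph system (IGS) $\mathfrak R$ consists of a connected graph $G_1=(S,E)$, a finite set $\mathcal T$ of types, a surjective typing $\mathfrak t:E\to\mathcal T$ and non-empty gluing rules $I_t\subseteq S\times S$. With $W_m=S^m$, $W_\#=\bigcup_{m\ge1}W_m$, $[w]_k=w_1\cdots w_k$, the replacement graphs $G_m=(W_m,E_m)$ are defined recursively: $(w,v)\in E_{m+1}$ iff either (1) $[w]_m=[v]_m$ and $(w_{m+1},v_{m+1})\in E$ (type $\mathfrak t(w_{m+1},v_{m+1})$), or (2) $([w]_m,[v]_m)\in E_m$ and $(w_{m+1},v_{m+1})\in I_{\mathfrak t([w]_m,[v]_m)}$ (type $\mathfrak t([w]_m,[v]_m)$). For $n\ge k$, $\pi_{n,k}$ maps a path of $G_n$ to the path of $G_k$ obtained by replacing each vertex $w$ by $[w]_k$ and deleting consecutive repetitions. A path $\theta$ in $G_m$ is an intersection path if there are paths $\theta_n$ in $G_n$ ($n\in\mathbb N$) with $\theta_m=\theta$, $\pi_{n,k}(\theta_n)=\theta_k$ for $n>k$, and $\lim_n\operatorname{len}(\theta_n)<\infty$. $\mathcal N(w)=\{v\in W_{|w|}:$ there is an intersection path from $w$ to $v\}$;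 $\mathfrak R$ is of bounded geometry if $\sup_{w\in W_\#}\operatorname{diam}_{d_{G_{|w|}}}(\mathcal N(w))<\infty$. Mapping of IGS $\varphi:\mathfrak R\to\mathfrak R'$: a graph mapping $G_1\to G_1'$ (edges go to edges or are collapsed) such that (i) if $\varphi(w_1)=\varphi(v_1)$ for an edge $\{w_1,v_1\}$ of type $t$ then $\varphi(w_2)=\varphi(v_2)$ for all $(w_2,v_2)\in I_t$; (ii) if $(w_1,v_1)\in E$ has type $t$ and $(\varphi(w_1),\varphi(v_1))\in E'$ has type $t'$ then $(\varphi(w_2),\varphi(v_2))\in I'_{t'}$ for all $(w_2,v_2)\in I_t$; (iii) if $(w_1,v_1)\in E$ has type $t$ and $(\varphi(v_1),\varphi(w_1))\in E'$ has type $t'$ then $(\varphi(v_2),\varphi(w_2))\in I'_{t'}$ for all $(w_2,v_2)\in I_t$. An isomorphism of IGS is a graph isomorphism such that it and its inverse are mappings of IGS; $\mathfrak R\subseteq\mathfrak R'$ (sub-system) means $S\subseteq S'$, same types, inclusion is a mapping of IGS. Cubical IGS: for integers $d_*\ge1,s_*\ge1,L_*\ge3$, $\mathfrak R(d_*,L_*,s_* )$ has symbols $\{1,\dots,L_*\}^{d_*}\times\{\underline1,\dots,\underline{s_*}\}$ with coordinates $c_i$ and sheet $s$; types $t_1,\dots,t_{d_*}$; $(w,v)$ is an edge of type $t_j$ iff $c_i(v)=c_i(w)$ ($i\ne j$), $c_j(v)=c_j(w)+1$; $(w,v)\in I_{t_j}$ iff $c_i(w)=c_i(v)$ ($i\ne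 j$), $(c_j(w),c_j(v))=(L_*,1)$, $s(w)=s(v)$. Sheet- and other-coordinate-preserving maps: $\eta_j:c_j\mapsto L_*+1-c_j$; $\alpha^+_{j,k}$ ($j\ne k$) swaps $c_j,c_k$; $\alpha^-_{j,k}$: $c_k\mapsto L_*+1-c_j$, $c_j\mapsto L_*+1-c_k$; $\mathcal G$ is the set of these. A cubical IGS is a sub-system $\mathfrak R\subseteq\mathfrak R(d_*,L_*,s_* )$ with: (C1) for each $j$, every symbol with $c_i\in\{1,L_*\}$ for all $i\ne j$ and sheet $\underline1$ (condition $(\ast_j)$) is in $S(\mathfrak R)$; (C2) if $w,v$ satisfy $(\ast_j)$, agree in coordinates $i\ne j$, and $c_j(v)=c_j(w)+1$, then $(w,v)\in E(\mathfrak R)$; (C3) if $w,v$ satisfy $(\ast_j)$, agree in coordinates $i\ne j$, and $(c_j(w),c_j(v))=(L_*,1)$, then $(w,v)\in I_{t_j}(\mathfrak R)$; (C4) each $\alpha\in\mathcal G$ restricts to an isomorphism of IGS $\mathfrak R\to\mathfrak R$. *)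

(* Defs.v *)
From mathcomp Require Import all_boot.

Set Implicit Arguments.
Unset Strict Implicit.
Unset Printing Implicit Defensive.

(* Iterated graph systems over a finite carrier type [V] of potential  *)
(* symbols and a finite type [T] of types.                             *)
(*  igs_sym R       = the symbol set S (a subset of V)                 *)
(*  igs_ety R t x y = (x,y) is an edge of G_1 of type t                *)
(*                    (E = union over t; the typing is the map E -> T) *)
(*  igs_glue R t    = the gluing rule I_t                              *)
Record IGS (V T : finType) := MkIGS {
  igs_sym : {set V};
  igs_ety : T -> rel V;
  igs_glue : T -> rel V
}.

Section IGSDefs.
Variables (V T : finType).

Definition igs_edge (R : IGS V T) (x y : V) : bool :=
  [exists t, igs_ety R t x y].

Definition igs_uedge (R : IGS V T) (x y : V) : bool :=
  igs_edge R x y || igs_edge R y x.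

Definition IGS_wf (R : IGS V T) : Prop :=
  igs_sym R != set0 /\
  (forall t x y, igs_ety R t x y -> x \in igs_sym R /\ y \in igs_sym R) /\
  (forall x y, igs_edge R x y -> ~~ igs_edge R y x) /\
  (forall t t' x y, igs_ety R t x y -> igs_ety R t' x y -> t = t') /\
  (forall t, exists x y, igs_ety R t x y) /\
  (forall t, exists x y, igs_glue R t x y) /\
  (forall t x y, igs_glue R t x y -> x \in igs_sym R /\ y \in igs_sym R) /\
  (forall x y, x \in igs_sym R -> y \in igs_sym R ->
     exists p, path (igs_uedge R) x p /\ last x p = y).

(* Replacement graphs G_m.  Vertices of G_m are words of length m over S,
   represented as sequences w = [:: w_1; ...; w_m].
   [Em R w v t] means (w,v) \in E_m with type t. *)
Inductive Em (R : IGS V T) : seq V -> seq V -> T -> Prop :=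
| Em_in (w : seq V) (a b : V) (t : T) :
    all (mem (igs_sym R)) w -> igs_ety R t a b ->
    Em R (rcons w a) (rcons w b) t
| Em_glue (w v : seq V) (a b : V) (t : T) :
    Em R w v t -> igs_glue R t a b ->
    Em R (rcons w a) (rcons v b) t.

Definition adj (R : IGS V T) (w v : seq V) : Prop :=
  exists t, Em R w v t \/ Em R v w t.

Definition word (R : IGS V T) (m : nat) (w : seq V) : bool :=
  (size w == m) && all (mem (igs_sym R)) w.

Fixpoint chain_adj (R : IGS V T) (x : seq V) (p : seq (seq V)) : Prop :=
  match p with
  | [::] => True
  | y :: p' => adj R x y /\ chain_adj R y p'
  end.

(* p is a path (non-empty sequence of vertices) in G_m; its length is
   (size p).-1 *)
Definition is_path (R : IGS V T) (m : nat) (p : seq (seq V)) : Prop :=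
  match p with
  | [::] => False
  | x :: p' => all (word R m) p /\ chain_adj R x p'
  end.

Fixpoint squash (s : seq (seq V)) : seq (seq V) :=
  match s with
  | x :: ((y :: _) as s') => if x == y then squash s' else x :: squash s'
  | _ => s
  end.

Definition proj (k : nat) (p : seq (seq V)) : seq (seq V) :=
  squash (map (take k) p).

(* theta is an intersection path in G_m.  The lengths len(theta_n) are
   non-decreasing in n, so "lim len(theta_n) < oo" is stated as
   boundedness of the lengths. *)
Definition is_ipath (R : IGS V T) (m : nat) (theta : seq (seq V)) : Prop :=
  exists Theta : nat -> seq (seq V),
    [/\ (forall n, 1 <= n -> is_path R n (Theta n)),
        Theta m = theta,
        (forall n k, 1 <= k -> k < n -> proj k (Theta n) = Theta k)
      & exists B, forall n, (size (Theta n)).-1 <= B].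

Definition inN (R : IGS V T) (w v : seq V) : Prop :=
  exists theta, [/\ is_ipath R (size w) theta, ohead theta = Some w
                  & last w theta = v].

Definition bounded_geometry (R : IGS V T) : Prop :=
  exists C : nat, forall w : seq V, 1 <= size w -> all (mem (igs_sym R)) w ->
    forall u v, inN R w u -> inN R w v ->
      exists p, [/\ is_path R (size w) p, ohead p = Some u, last u p = v
                  & (size p).-1 <= C].

End IGSDefs.

Definition IGS_mapping (V T V' T' : finType) (phi : V -> V')
    (R : IGS V T) (R' : IGS V' T') : Prop :=
  [/\ (forall x, x \in igs_sym R -> phi x \in igs_sym R'),
      (forall x y, igs_edge R x y ->
         [\/ igs_edge R' (phi x) (phi y), igs_edge R' (phi y) (phi x)
           | phi x = phi y]),
      (forall t x y, igs_ety R t x y -> phi x = phi y ->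
         forall x2 y2, igs_glue R t x2 y2 -> phi x2 = phi y2),
      (forall t t' x y, igs_ety R t x y -> igs_ety R' t' (phi x) (phi y) ->
         forall x2 y2, igs_glue R t x2 y2 -> igs_glue R' t' (phi x2) (phi y2))
    &
      (forall t t' x y, igs_ety R t x y -> igs_ety R' t' (phi y) (phi x) ->
         forall x2 y2, igs_glue R t x2 y2 -> igs_glue R' t' (phi y2) (phi x2))].

Definition IGS_iso (V T V' T' : finType) (phi : V -> V')
    (R : IGS V T) (R' : IGS V' T') : Prop :=
  exists psi : V' -> V,
    [/\ {in igs_sym R, cancel phi psi},
        {in igs_sym R', cancel psi phi},
        (forall x y, x \in igs_sym R -> y \in igs_sym R ->
           igs_uedge R x y = igs_uedge R' (phi x) (phi y)),
        IGS_mapping phi R R'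
      & IGS_mapping psi R' R].

Definition IGS_sub (V T : finType) (R R' : IGS V T) : Prop :=
  igs_sym R \subset igs_sym R' /\ IGS_mapping id R R'.

(* Cubical IGS.  Coordinates c_i in {1,...,L} are represented by       *)
(* 'I_L (value c_i - 1); sheets {1,...,s} by 'I_s (value sheet - 1);   *)
(* the type t_j by j : 'I_d.                                           *)
Definition CSym (d L s : nat) : finType := ({ffun 'I_d -> 'I_L} * 'I_s)%type.

Section Cubical.
Variables (d L s : nat).
Local Notation Sym := (CSym d L s).

Definition crd (i : 'I_d) (x : Sym) : nat := val (x.1 i).
Definition sheet (x : Sym) : nat := val x.2.

Definition same_off (j : 'I_d) (x y : Sym) : bool :=
  [forall i, (i != j) ==> (x.1 i == y.1 i)].

Definition RFull : IGS Sym 'I_d :=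
  MkIGS [set: Sym]
    (fun j x y => same_off j x y && (crd j y == (crd j x).+1))
    (fun j x y => [&& same_off j x y, crd j x == L.-1, crd j y == 0
                    & sheet x == sheet y]).

Definition star (j : 'I_d) (x : Sym) : bool :=
  [forall i, (i != j) ==> ((crd i x == 0) || (crd i x == L.-1))]
  && (sheet x == 0).

Definition setc (x : Sym) (f : 'I_d -> 'I_L) : Sym := ([ffun i => f i], x.2).

Definition eta (j : 'I_d) (x : Sym) : Sym :=
  setc x (fun i => if i == j then rev_ord (x.1 j) else x.1 i).
Definition alphaP (j k : 'I_d) (x : Sym) : Sym :=
  setc x (fun i => if i == j then x.1 k else if i == k then x.1 j else x.1 i).
Definition alphaM (j k : 'I_d) (x : Sym) : Sym :=
  setc x (fun i => if i == k then rev_ord (x.1 j)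
                   else if i == j then rev_ord (x.1 k) else x.1 i).

Definition cubical (R : IGS Sym 'I_d) : Prop :=
  IGS_wf R /\ IGS_sub R RFull /\
  [/\
      (forall j x, star j x -> x \in igs_sym R),
      (forall j x y, star j x -> star j y -> same_off j x y ->
         crd j y = (crd j x).+1 -> igs_edge R x y),
      (forall j x y, star j x -> star j y -> same_off j x y ->
         crd j x = L.-1 -> crd j y = 0 -> igs_glue R j x y)
    &
      (forall j, IGS_iso (eta j) R R) /\
      (forall j k, j != k -> IGS_iso (alphaP j k) R R /\ IGS_iso (alphaM j k) R R)].

End Cubical.

(* Main.v *)
Require Import Defs.
From mathcomp Require Import all_boot zify.
From Stdlib Require Import Classical ClassicalEpsilon.

Set Implicit Arguments.
Unset Strict Implicit.
Unset Printing Implicit Defensive.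

Section Arith.
Variables (d L s : nat).
Hypothesis hL : 3 <= L.
Local Notation Sym := (CSym d L s).

Definition Xc (j : 'I_d) (v : seq Sym) : nat :=
  foldl (fun acc a => acc * L + crd j a) 0 v.

Lemma crd_lt j (a : Sym) : crd j a < L.
Proof. exact: ltn_ord. Qed.

Lemma Xc_rcons j v a : Xc j (rcons v a) = Xc j v * L + crd j a.
Proof. by rewrite /Xc foldl_rcons. Qed.

Lemma Xc_cat j s1 s2 : Xc j (s1 ++ s2) = Xc j s1 * L ^ size s2 + Xc j s2.
Proof.
elim/last_ind: s2 => [|s2 a IH]; first by rewrite cats0 muln1 addn0.
rewrite -rcons_cat !Xc_rcons IH size_rcons expnS.

nia.
Qed.

Lemma Xc_lt j v : Xc j v < L ^ size v.
Proof.
elim/last_ind: v => [|v a IH]; first by [].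
rewrite Xc_rcons size_rcons expnS.
have := crd_lt j a. nia.
Qed.

Lemma Xc_inj j v v' : size v = size v' -> Xc j v = Xc j v' ->
  map (crd j) v = map (crd j) v'.
Proof.
elim/last_ind: v v' => [|v a IH] v'.
  by case: v' => //.
case/lastP: v' => [|v' a']; first by rewrite size_rcons.
rewrite !size_rcons !Xc_rcons => [[Hs]] HX.
have ha := crd_lt j a; have ha' := crd_lt j a'.
have E1 : crd j a = crd j a'.
  have := congr1 (fun x => x %% L) HX.
  by rewrite /= !modnMDl !modn_small.
have E2 : Xc j v = Xc j v'.
  rewrite E1 in HX. by move/eqP: HX; rewrite eqn_add2r eqn_pmul2r; [move/eqP|lia].
by rewrite !map_rcons (IH v') // E1.
Qed.

Lemma exp_uniq u u' e e' : 0 < L -> u * L ^ e = u' * L ^ e' ->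
  ~~ (L %| u) -> ~~ (L %| u') -> e = e'.
Proof.
move=> L0.
wlog le : u u' e e' / e <= e'.
  move=> W H1 H2 H3; case: (leqP e e') => h; first exact: (W u u' e e' h H1 H2 H3).
  symmetry; apply: (W u' u e' e (ltnW h)) => //; by rewrite H1.
move=> E Hu Hu'.
move: le; rewrite leq_eqVlt => /orP[/eqP //|lt].
have Eu : u = u' * L ^ (e' - e).
  apply/eqP; rewrite -(@eqn_pmul2r (L ^ e)); last by rewrite expn_gt0 L0.
  by rewrite -mulnA -expnD subnK ?(ltnW lt) // E.
case/negP: Hu; rewrite Eu.
have [f ->] : exists f, e' - e = f.+1.
  by exists (e' - e).-1; rewrite prednK // subn_gt0.
by rewrite expnS mulnCA dvdn_mulr.
Qed.

End Arith.
Section Cub.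
Variables (d L s : nat).
Hypothesis hL : 3 <= L.
Hypothesis hs : 0 < s.
Local Notation Sym := (CSym d L s).
Variable R : IGS Sym 'I_d.
Hypothesis cubR : cubical R.

Let oL1 : 'I_L := @Ordinal L L.-1 (ltac:(by case: L hL)).
Let o0 : 'I_L := @Ordinal L 0 (ltac:(by case: L hL)).
Let s0 : 'I_s := @Ordinal s 0 hs.
Let xa (j : 'I_d) : Sym := ([ffun i => if i == j then oL1 else o0], s0).
Let xb (j : 'I_d) : Sym := ([ffun i => o0], s0).

Let crd_xa j i : crd i (xa j) = if i == j then L.-1 else 0.
Proof. by rewrite /crd /xa ffunE; case: (i == j). Qed.
Let crd_xb j i : crd i (xb j) = 0.
Proof. by rewrite /crd /xb ffunE. Qed.

Let glue_ab j : igs_glue R j (xa j) (xb j).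
Proof.
have [_ [_ [_ _ C3 _]]] := cubR.
apply: C3.
- apply/andP; split; last by [].
  apply/forallP => i; apply/implyP => ne; by rewrite crd_xa (negbTE ne).
- apply/andP; split; last by [].
  apply/forallP => i; apply/implyP => ne; by rewrite crd_xb.
- apply/forallP => i; apply/implyP => ne; by rewrite /xa /xb !ffunE (negbTE ne).
- by rewrite crd_xa eqxx.
- by rewrite crd_xb.
Qed.

Lemma ety_dir t a b : igs_ety R t a b -> same_off t a b /\ crd t b = (crd t a).+1.
Proof.
move=> H.
have [[_ [_ [asym _]]] [[_ map] _]] := cubR.
case: map => _ m2 _ m4 m5.
have He : igs_edge R a b by apply/existsP; exists t.
case: (m2 a b He) => /=.
- case/existsP => t' /= H'.
  have := m4 t t' a b H H' _ _ (glue_ab t).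
  case/and4P => _ h1 _ _.
  case: (eqVneq t' t) => [Et|ne].
    by subst t'; case/andP: H' => -> /eqP.
  by move: h1; rewrite crd_xa (negbTE ne); lia.
- case/existsP => t' /= H'.
  have := m5 t t' a b H H' _ _ (glue_ab t).
  case/and4P => _ h1 _ _.
  by move: h1; rewrite crd_xb; lia.
- move=> Eab; subst b.
  by have := asym a a He; rewrite He.
Qed.

Lemma glue_dir t a b : igs_glue R t a b ->
  [/\ same_off t a b, crd t a = L.-1, crd t b = 0 & a.2 = b.2].
Proof.
move=> H.
have [[_ [_ [_ [_ [sur _]]]]] [[_ map] _]] := cubR.
case: map => _ _ _ m4 _.
have [x [y Hxy]] := sur t.
have [so cr] := ety_dir Hxy.
have HF : igs_ety (RFull d L s) t x y by rewrite /= so cr eqxx.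
have := m4 t t x y Hxy HF a b H.
rewrite /=; case/and4P => h1 /eqP h2 /eqP h3 /eqP h4; split => //.
exact: val_inj.
Qed.



Lemma same_offE t (a b : Sym) i : same_off t a b -> i != t -> crd i a = crd i b.
Proof. by move/forallP/(_ i)/implyP => H /H /eqP; rewrite /crd => ->. Qed.

Lemma Em_X y z t : Em R y z t ->
  [/\ size y = size z, Xc t z = (Xc t y).+1 & forall i, i != t -> Xc i z = Xc i y].
Proof.
elim => {y z t} [w a b t _ H | w v a b t _ [IH1 IH2 IH3] H].
- have [so cr] := ety_dir H.
  rewrite !size_rcons !Xc_rcons cr addnS; split => // i ne.
  by rewrite !Xc_rcons (same_offE so ne).
- have [so c1 c2 _] := glue_dir H.
  rewrite !size_rcons !Xc_rcons IH1 IH2 c1 c2; split => //.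
    lia.
  by move=> i ne; rewrite !Xc_rcons IH3 // (same_offE so ne).
Qed.

Variable x0 : Sym.

Lemma Em_sh y z t : Em R y z t ->
  exists e, (exists u, Xc t z = u * L ^ e /\ ~~ (L %| u)) /\
    forall k, k != size y - e.+1 -> (nth x0 y k).2 = (nth x0 z k).2.
Proof.
move=> H; have [Hs _ _] := Em_X H; move: H Hs.
elim => {y z t} [w a b t _ H _ | w v a b t HE IH H Hs].
- have [so cr] := ety_dir H.
  exists 0; split.
    exists (Xc t w * L + crd t b); rewrite Xc_rcons expn0 muln1; split => //.
    rewrite /dvdn modnMDl modn_small; last exact: ltn_ord.
    by rewrite cr.
  move=> k; rewrite size_rcons subn1 /= => ne.
  by rewrite !nth_rcons (negbTE ne).
- have [so c1 c2 e2] := glue_dir H.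
  move: Hs; rewrite !size_rcons => -[Hs].
  have [e [[u [Hu Hd]] Hk]] := IH Hs.
  exists e.+1; split.
    exists u; rewrite Xc_rcons c2 addn0 Hu expnS; split => //; lia.
  move=> k ne.
  rewrite !nth_rcons -Hs.
  case: ltnP => lt.
    apply: Hk; lia.
  by case: eqP.
Qed.

End Cub.

Section Main.
Variables (d L s : nat).
Hypothesis hL : 3 <= L.
Hypothesis hs : 0 < s.
Local Notation Sym := (CSym d L s).
Variable R : IGS Sym 'I_d.
Hypothesis cubR : cubical R.

Let x0 : Sym := ([ffun => @Ordinal L 0 (ltac:(by case: L hL))], @Ordinal s 0 hs).

Definition rb (a b : seq Sym) : bool :=
  if excluded_middle_informative (adj R a b) then true else false.

Lemma rbP a b : reflect (adj R a b) (rb a b).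
Proof. by rewrite /rb; case: excluded_middle_informative => H; constructor. Qed.

Lemma rb_sym a b : rb a b = rb b a.
Proof.
apply/rbP/rbP => -[t H]; exists t; tauto.
Qed.

Lemma chain_path x p : chain_adj R x p <-> path rb x p.
Proof.
elim: p x => [|y p IH] x //=.
split; first by case=> /rbP -> /IH ->.
by case/andP => /rbP H /IH.
Qed.

Lemma adj_X y z : adj R y z ->
  size y = size z /\ forall j, Xc j z <= (Xc j y).+1 /\ Xc j y <= (Xc j z).+1.
Proof.
case=> t [] H; have [E1 E2 E3] := Em_X hL hs cubR H; split => // j;
  case: (eqVneq j t) => [->|ne]; rewrite ?E2 ?E3 //; lia.
Qed.

Lemma pivot j x p : path rb x p -> forall a, a \in x :: p ->
  Xc j a <= Xc j x + size p /\ Xc j x <= Xc j a + size p.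
Proof.
elim: p x => [|y p IH] x /=.
  by move=> _ a; rewrite inE => /eqP ->; lia.
case/andP => /rbP /adj_X [_ /(_ j) [h1 h2]] /IH H a.
rewrite inE => /orP [/eqP -> | /H [h3 h4]]; first lia.
rewrite !addnS; split.
  by apply: leq_trans h3 _; rewrite -addSn leq_add2r.
by apply: leq_trans h2 _; rewrite ltnS.
Qed.

Lemma squash_cons2 (x y : seq Sym) t :
  squash (x :: y :: t) = if x == y then squash (y :: t) else x :: squash (y :: t).
Proof. by []. Qed.

Lemma mem_squash (t : seq (seq Sym)) y : y \in squash t -> y \in t.
Proof.
elim: t => [|x t IH] //.
case: t IH => [|z t] IH //.
rewrite squash_cons2; case: eqP => _.
  by move/IH => H; rewrite inE H orbT.
rewrite inE => /orP [/eqP ->|/IH H]; first by rewrite inE eqxx.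
by rewrite inE H orbT.
Qed.

Fixpoint pedge (x : seq Sym) (p : seq (seq Sym)) (y z : seq Sym) : bool :=
  if p is a :: p' then ((x == y) && (a == z)) || pedge a p' y z else false.

Lemma pedge_rb x p y z : path rb x p -> pedge x p y z -> rb y z.
Proof.
elim: p x => [|a p IH] x //=.
case/andP => H1 H2 /orP [/andP [/eqP <- /eqP <-] //| ]; exact: IH.
Qed.

Lemma pedge_mem x p y z : pedge x p y z -> y \in x :: p /\ z \in x :: p.
Proof.
elim: p x => [|a p IH] x //=.
case/orP => [/andP [/eqP <- /eqP <-]| /IH [h1 h2]].
  by rewrite !inE !eqxx orbT.
by move: h1 h2; rewrite !inE => -> ->; rewrite !orbT.
Qed.

Lemma pedge_ind (P : seq Sym -> Prop) x p : P x ->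
  (forall y z, pedge x p y z -> P y -> P z) -> forall v, v \in x :: p -> P v.
Proof.
elim: p x => [|a p IH] x Px H v.
  by rewrite inE => /eqP ->.
rewrite inE => /orP [/eqP -> //|].
apply: IH.
  apply: (H x) => //=; by rewrite !eqxx.
by move=> y z e; apply: H; rewrite /= e orbT.
Qed.

Definition sh k (v : seq Sym) : 'I_s := (nth x0 v k).2.

Definition KT := ({ffun 'I_d -> bool} * {ffun 'I_d -> 'I_s})%type.
Definition M := #|{: KT}|.

Lemma core w u : 1 <= size w -> inN R w u ->
  exists p, [/\ path rb w p, last w p = u, all (word R (size w)) (w :: p)
              & size (w :: p) <= M].
Proof.
move=> hw [theta [[Th [HP Hm Hproj [B HB]]] Hhead Hlast]].
set m := size w.
have [p Etheta] : exists p, theta = w :: p.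
  by case: theta Hhead {Hm Hlast} => //= a p [<-]; exists p.
have HPm := HP m hw; rewrite Hm Etheta in HPm.
case: HPm => Hwords /chain_path Hpath.
have sz : forall v, v \in w :: p -> size v = m.
  by move=> v Hv; move/allP: Hwords => /(_ v Hv) /andP [/eqP].
have box : forall j y z, y \in w :: p -> z \in w :: p -> Xc j y <= (Xc j z).+1.
  move=> j y z Hy Hz.
  set n := m + (2 * B).+1.
  have Hn : 1 <= n by lia.
  have HPn := HP n Hn.
  have Hprj : proj m (Th n) = Th m by apply: Hproj => //; lia.
  have HBn := HB n.
  case E: (Th n) HPn HBn Hprj => [|x pn] //= [Hwn /chain_path Hcn] Hsz Hprj.
  have pre : forall y, y \in w :: p -> exists a, a \in x :: pn /\ y = take m a.
    move=> y0 Hy0; rewrite -Etheta -Hm -Hprj /proj in Hy0.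
    move/mem_squash: Hy0; case/mapP => a Ha ->; by exists a.
  have [a [Ha ->]] := pre y Hy.
  have [b [Hb ->]] := pre z Hz.
  have sza : size a = n by move/allP: (Hwn : all (word R n) (x :: pn)) => /(_ a Ha) /andP [/eqP].
  have szb : size b = n by move/allP: (Hwn : all (word R n) (x :: pn)) => /(_ b Hb) /andP [/eqP].
  have decomp : forall c : seq Sym, size c = n ->
      Xc j c = Xc j (take m c) * L ^ (2 * B).+1 + Xc j (drop m c)
      /\ Xc j (drop m c) < L ^ (2 * B).+1.
    move=> c Hc.
    have Hd : size (drop m c) = (2 * B).+1 by rewrite size_drop Hc; lia.
    split; last by rewrite -Hd; apply: Xc_lt.
    have e : n - m = (2 * B).+1 by rewrite /n; lia.
    rewrite -{1}(cat_take_drop m c) Xc_cat; last exact: hL.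
    by congr (_ * (_ ^ _) + _); exact: Hd.
  have [Ea ra] := decomp a sza.
  have [Eb rb'] := decomp b szb.
  have [pa _] := pivot j Hcn Ha.
  have [_ pb] := pivot j Hcn Hb.
  have NB : (2 * B).+1 < L ^ (2 * B).+1 by apply: ltn_expl; lia.
  rewrite leqNgt; apply/negP => lt.
  have := leq_mul lt (leqnn (L ^ (2 * B).+1)).
  move: Ea Eb ra rb' pa pb NB Hsz.
  set N := L ^ (2 * B).+1.
  set Y := Xc j (take m a). set Z := Xc j (take m b).
  set A := Xc j a. set Bb := Xc j b. set X := Xc j x.
  set ra' := Xc j (drop m a). set rb'' := Xc j (drop m b). set P := size pn.
  clearbody Y Z A Bb X ra' rb'' P N.
  move=> e1 e2 e3 e4 e5 e6 e7 e8 e9.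
  have : Z * N + 2 * N <= Y * N by rewrite -mulnDl addn2.
  lia.
have hq : forall j : 'I_d, exists q, forall y z, pedge w p y z ->
    (Em R y z j \/ Em R z y j) -> forall k, k != q -> sh k y = sh k z.
  move=> j.
  case: (classic (exists a b, [/\ a \in w :: p, b \in w :: p & Em R a b j])).
    move=> [a0 [b0 [Ha0 Hb0 E0]]].
    have [e0 [[u0 [Hu0 Hd0]] _]] := Em_sh hL hs cubR x0 E0.
    exists (m - e0.+1).
    have claim : forall a b, a \in w :: p -> b \in w :: p -> Em R a b j ->
        forall k, k != m - e0.+1 -> sh k a = sh k b.
      move=> a b Ha Hb Eab k Hk.
      have [e [[u1 [Hu1 Hd1]] Hk1]] := Em_sh hL hs cubR x0 Eab.
      have [_ X1 _] := Em_X hL hs cubR Eab.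
      have [_ X0 _] := Em_X hL hs cubR E0.
      have b1 := box j b a0 Hb Ha0.
      have b2 := box j b0 a Hb0 Ha.
      have EX : Xc j b = Xc j b0 by lia.
      have ee : e = e0.
        apply: (exp_uniq (L := L)) Hd1 Hd0; first by lia.
        by rewrite -Hu1 -Hu0.
      apply: Hk1; by rewrite sz // ee.
    move=> y z /pedge_mem [Hy Hz] [H|H] k Hk.
      exact: claim.
    by symmetry; apply: claim.
  move=> Hno; exists 0 => y z /pedge_mem [Hy Hz] [H|H]; exfalso; apply: Hno.
    by exists y, z.
  by exists z, y.
have [q Hq] : exists q : 'I_d -> nat, forall j y z, pedge w p y z ->
    (Em R y z j \/ Em R z y j) -> forall k, k != q j -> sh k y = sh k z.
  exists (fun j => proj1_sig (constructive_indefinite_description _ (hq j))).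
  move=> j; exact: (proj2_sig (constructive_indefinite_description _ (hq j))).
have inv : forall v, v \in w :: p -> forall k, (forall j, k != q j) -> sh k v = sh k w.
  apply: pedge_ind => // y z e IH k Hk.
  have /rbP [t Ht] := pedge_rb Hpath e.
  by rewrite -(IH k Hk); symmetry; apply: (Hq t y z e Ht).
pose key (v : seq Sym) : KT := ([ffun j => Xc j v == Xc j w], [ffun j => sh (q j) v]).
have inj : {in w :: p &, injective key}.
  move=> v v' Hv Hv' [E1 E2].
  have Hw : w \in w :: p by rewrite inE eqxx.
  have EX : forall j, Xc j v = Xc j v'.
    move=> j; have := congr1 (fun f : {ffun 'I_d -> bool} => f j) E1; rewrite !ffunE.
    have := box j v w Hv Hw; have := box j w v Hw Hv.
    have := box j v' w Hv' Hw; have := box j w v' Hw Hv'.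
    have := box j v v' Hv Hv'; have := box j v' v Hv' Hv.
    case: eqP; case: eqP; lia.
  have Es : size v = size v' by rewrite !sz.
  apply: (@eq_from_nth _ x0) => // k Hk.
  have H1 : (nth x0 v k).1 = (nth x0 v' k).1.
    apply/ffunP => i; apply: val_inj.
    have := congr1 (fun t => nth 0 t k) (Xc_inj hL Es (EX i)).
    by rewrite /= !(nth_map x0) // -Es.
  have H2 : (nth x0 v k).2 = (nth x0 v' k).2.
    case: (boolP [exists j, k == q j]) => [/existsP [j /eqP ->]| /existsPn Hn].
      by have := congr1 (fun f : {ffun 'I_d -> 'I_s} => f j) E2; rewrite !ffunE.
    have := inv v Hv k Hn; have := inv v' Hv' k Hn; rewrite /sh => -> -> //.
  by move: H1 H2; case: (nth x0 v k) => ? ?; case: (nth x0 v' k) => ? ? /= -> ->.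
have Hl : last w p = u by rewrite -Hlast Etheta.
move: Hl; case: (shortenP Hpath) => p' Hp' Hu Hsub Hl.
have sub' : {subset w :: p' <= w :: p}.
  move=> v; rewrite !inE => /orP [->//|/Hsub ->]; by rewrite orbT.
exists p'; split => //.
  by apply/allP => v /sub' Hv; move/allP: Hwords; apply.
have U : uniq (map key (w :: p')).
  rewrite map_inj_in_uniq // => v v' Hv Hv'; apply: inj; exact: sub'.
by rewrite -(size_map key) -(card_uniqP U) /M max_card.
Qed.

Lemma last_rev_belast (w : seq Sym) p :
  last (last w p) (rev (belast w p)) = w.
Proof.
have E : last w p :: rev (belast w p) = rcons (rev p) w.
  by rewrite -rev_rcons -lastI rev_cons.
by rewrite -(last_cons w) E last_rcons.
Qed.

Lemma bg : bounded_geometry R.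
Proof.
exists (2 * M) => w hw _ u v Hu Hv.
have [p1 [P1 L1 W1 S1]] := core hw Hu.
have [p2 [P2 L2 W2 S2]] := core hw Hv.
exists (u :: (rev (belast w p1) ++ p2)); split => //.
- split.
    rewrite /= -L1 all_cat all_rev.
    apply/and3P; split.
    - by move/allP: W1; apply; exact: mem_last.
    - by apply/allP => x /mem_belast; move/allP: W1; apply.
    - by move: W2 => /= /andP [].
  apply/chain_path; rewrite cat_path -L1 last_rev_belast P2 andbT.
  rewrite rev_path; apply: etrans P1; apply: eq_path => a b; exact: rb_sym.
- by rewrite /= last_cat -L1 last_rev_belast.
- rewrite /= size_cat size_rev size_belast; move: S1 S2 => /= ; lia.
Qed.

End Main.

Theorem proposition5p7 (d L s : nat) (hd : 1 <= d) (hs : 1 <= s) (hL : 3 <= L)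
    (R : IGS (CSym d L s) 'I_d) :
  cubical R -> bounded_geometry R.
Proof. move=> cubR; exact: (bg hL hs cubR). Qed.
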